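(* Let $n\ge 2$ and let $\dot{\mathbf x}=\mathbf f(\sigma,\mathbf x)$ be a multistable regulatory system (MSRS) as defined in the context, with $f_k(\sigma,\mathbf x)=-l(x_k)+\sigma\frac{g(x_k)}{P(x_1,\dots,x_n)+h(x_k)}$; fix $\sigma>0$. Let $\mathbf r=(q,\dots,q)\in\mathbb R_{>0}^n$ be an equilibrium (a diagonal equilibrium). Put $D_n(\mathbf x)=-\frac{P(\mathbf x)+h(x_n)}{l(x_n)}$, $$\tau=\frac{\partial f_n}{\partial x_n}(\mathbf r),\qquad \xi=\frac{\frac{\partial P}{\partial x_{n-1}}(\mathbf r)}{D_n(\mathbf r)},\qquad G_1=\tau-\xi,\qquad G_2=\tau+(n-1)\xi .$$ Then $\det\left(\lambda I-J_{\mathbf f}(\mathbf r)\right)=(\lambda-G_1)^{n-1}(\lambda-G_2)$, where $J_{\mathbf f}=\left[\frac{\partial f_i}{\partial x_j}\right]_{i,j=1}^n$ is the Jacobian matrix with respect to $\mathbf x$.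
   Context: A system of ODEs $\frac{dx_k}{dt}=f_k(\sigma,x_1,\dots,x_n)$, $k=1,\dots,n$, is called a multistable regulatory system (MSRS) if $f_k(\sigma,x_1,\dots,x_n)=-l(x_k)+\sigma\frac{g(x_k)}{P(x_1,\dots,x_n)+h(x_k)}$, where $l,g,h$ are real functions of one real variable and $P$ is a real function of $n$ real variables (all differentiable), and: (1) $\sigma$ is a positive parameter; (2) $P$ is symmetric, i.e. unchanged under interchanging any two of its arguments; (3) for every $k$ and every $(x_1,\dots,x_n)\in\mathbb R_{>0}^n$, $P(x_1,\dots,x_n)+h(x_k)>0$; (4) $l(z)\neq 0$ and for every $\sigma>0$ the function $z\mapsto \sigma\frac{g(z)}{l(z)}-h(z)$ has at most one extreme point for $z\in\mathbb R_{>0}$. For a given $\sigma$, a point $\mathbf r\in\mathbb R_{>0}^n$ is an equilibrium if $f_1(\sigma,\mathbf r)=\dots=f_n(\sigma,\mathbf r)=0$. *)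

(* Defs.v *)
From HB Require Import structures.
From mathcomp Require Import all_boot all_order all_algebra.
From mathcomp Require Import all_classical all_reals all_analysis.
From mathcomp Require Import perm.
Set Implicit Arguments. Unset Strict Implicit. Unset Printing Implicit Defensive.
Import Order.TTheory GRing.Theory Num.Theory.
Import numFieldNormedType.Exports.
Local Open Scope ring_scope.

(* Points of R^n are row vectors 'rV[R]_n; coordinate k of x is x 0 k. *)

Definition partial (R : realType) (n : nat) (F : 'rV[R]_n -> R) (j : 'I_n)
  (x : 'rV[R]_n) : R := 'D_(delta_mx 0 j) F x.

Definition msrs_f (R : realType) (n : nat) (l g h : R -> R) (P : 'rV[R]_n -> R)
  (sigma : R) (k : 'I_n) (x : 'rV[R]_n) : R :=
  - l (x 0 k) + sigma * (g (x 0 k) / (P x + h (x 0 k))).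

Definition msrs_jacobian (R : realType) (n : nat) (l g h : R -> R)
  (P : 'rV[R]_n -> R) (sigma : R) (x : 'rV[R]_n) : 'M[R]_n :=
  \matrix_(i, j) partial (msrs_f l g h P sigma i) j x.

Definition symmetric_fun (R : realType) (n : nat) (P : 'rV[R]_n -> R) : Prop :=
  forall (i j : 'I_n) (x : 'rV[R]_n), P (col_perm (tperm i j) x) = P x.

Definition extreme_point_pos (R : realType) (F : R -> R) (z : R) : Prop :=
  0 < z /\ exists e : R, 0 < e /\
    ((forall y, 0 < y -> `|y - z| < e -> F y <= F z) \/
     (forall y, 0 < y -> `|y - z| < e -> F z <= F y)).

Definition at_most_one_extreme_point (R : realType) (F : R -> R) : Prop :=
  forall z1 z2, extreme_point_pos F z1 -> extreme_point_pos F z2 -> z1 = z2.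

Definition is_MSRS (R : realType) (n : nat) (l g h : R -> R)
  (P : 'rV[R]_n -> R) (sigma : R) : Prop :=
  [/\ (forall z : R, differentiable l z),
      (forall z : R, differentiable g z),
      (forall z : R, differentiable h z),
      (forall x : 'rV[R]_n, differentiable P x) &
   [/\ 0 < sigma,
       symmetric_fun P,
       (forall (k : 'I_n) (x : 'rV[R]_n), (forall i, 0 < x 0 i) ->
          0 < P x + h (x 0 k)),
       (forall z : R, 0 < z -> l z != 0) &
       (forall s : R, 0 < s ->
          at_most_one_extreme_point (fun z => s * (g z / l z) - h z))]].

Definition msrs_equilibrium (R : realType) (n : nat) (l g h : R -> R)
  (P : 'rV[R]_n -> R) (sigma : R) (r : 'rV[R]_n) : Prop :=
  (forall i, 0 < r 0 i) /\ forall k, msrs_f l g h P sigma k r = 0.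

(* Main.v *)
Require Import Defs.
From HB Require Import structures.
From mathcomp Require Import all_boot all_order all_algebra.
From mathcomp Require Import all_classical all_reals all_analysis.
Import Order.TTheory GRing.Theory Num.Theory.
Import numFieldNormedType.Exports.
Local Open Scope ring_scope.
From mathcomp Require Import ring perm.



Lemma ord_ltF {n} {i j : 'I_n} : (i < j)%N -> (i == j) = false.
Proof. by move=> h; apply/eqP => E; rewrite E ltnn in h. Qed.

Lemma det_de (S : comRingType) (n : nat) (d e : S) :
  \det (\matrix_(i, j) (if i == j then d else e) : 'M[S]_n.+1)
  = (d - e) ^+ n * (d + e *+ n).
Proof.
set A := \matrix_(i, j) _.
pose E : 'M[S]_n.+1 := \matrix_(i, j) ((j == 0) || (i == j))%:R.
pose F : 'M[S]_n.+1 := \matrix_(i, j) ((i == j)%:R - ((i != 0) && (j == 0))%:R).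
have dE : \det E = 1.
  rewrite det_trig; last first.
    apply/forallP => i; apply/forallP => j; apply/implyP => lij.
    rewrite mxE; case: (j =P 0) => [j0|_]; first by rewrite j0 ltn0 in lij.
    by rewrite (ord_ltF lij).
  by rewrite big1 // => i _; rewrite mxE eqxx orbT.
have dF : \det F = 1.
  rewrite det_trig; last first.
    apply/forallP => i; apply/forallP => j; apply/implyP => lij.
    rewrite mxE eq_sym (ord_ltF lij); case: (j =P 0) => [j0|_]; first by rewrite j0 ltn0 in lij.
    by rewrite andbF subrr.
  by apply: big1 => i _; rewrite mxE eqxx andNb subr0.
have rowsum : forall i, \sum_k A i k = d + e *+ n.
  move=> i; rewrite (bigD1 i) //= mxE eqxx; congr (_ + _).
  rewrite (eq_bigr (fun _ => e)); last by move=> k /negbTE ki; rewrite mxE eq_sym ki.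
  by rewrite sumr_const cardC1 card_ord.
set C := F *m (A *m E).
have CE : forall i j, C i j =
   if j == 0 then (if i == 0 then d + e *+ n else 0)
   else (if i == 0 then e else if i == j then d - e else 0).
  have BE : forall i j, (A *m E) i j = if j == 0 then d + e *+ n else A i j.
    move=> i j; rewrite mxE; case: eqP => [->|/eqP j0].
      by rewrite -(rowsum i); apply: eq_bigr => k _; rewrite !mxE /= mulr1.
    rewrite (bigD1 j) //= big1 ?addr0; first by rewrite !mxE (negbTE j0) eqxx mulr1.
    by move=> k /negbTE kj; rewrite !mxE (negbTE j0) eq_sym kj mulr0.
  move=> i j; rewrite mxE.
  have -> : \sum_j0 F i j0 * (A *m E) j0 j = (A *m E) i j - ((i != 0)%:R * (A *m E) 0 j).
    rewrite (eq_bigr (fun k => (i == k)%:R * (A *m E) k j - ((i != 0) && (k == 0))%:R * (A *m E) k j)); last first.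
      by move=> k _; rewrite mxE mulrBl.
    rewrite sumrB; congr (_ - _).
      rewrite (bigD1 i) //= eqxx mul1r big1 ?addr0 // => k /negbTE ki.
      by rewrite eq_sym ki mul0r.
    rewrite (bigD1 0) //= eqxx andbT big1 ?addr0 // => k /negbTE k0.
    by rewrite k0 andbF mul0r.
  rewrite !BE; case: (j =P 0) => [j0|/eqP j0].
    have [i0|i0] := eqVneq i 0; first by rewrite /= mul0r subr0.
    by rewrite /= mul1r subrr.
  have [i0|i0] := eqVneq i 0.
    by rewrite /= mul0r subr0 mxE i0 eq_sym (negbTE j0).
  rewrite /= mul1r !mxE [0 == j]eq_sym (negbTE j0); case: ifP => _ //; by rewrite subrr.
have : \det C = (d - e) ^+ n * (d + e *+ n).
  rewrite -det_tr det_trig; last first.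
    apply/forallP => i; apply/forallP => j; apply/implyP => lij.
    have j0 : (j == 0) = false by apply/eqP => Ej; rewrite Ej in lij.
    rewrite mxE CE j0 [j == i]eq_sym (ord_ltF lij); by case: ifP.
  have o0 : (ord0 == 0 :> 'I_n.+1) = true by [].
  rewrite big_ord_recl mxE CE o0 mulrC; congr (_ * _).
  rewrite (eq_bigr (fun _ => d - e)); first by rewrite prodr_const card_ord.
  move=> i _; rewrite mxE CE eqxx.
  have -> : (lift ord0 i == 0 :> 'I_n.+1) = false by [].
  by [].
by rewrite /C !det_mulmx dE dF mul1r mulr1.
Qed.


Lemma line_fun (R : realType) n (F : 'rV[R]_n -> R) (x v : 'rV[R]_n) :
  (fun h : R => h^-1 *: ((F \o shift x) (h *: v) - F x)) =
  (fun h : R => h^-1 *: (((fun t : R => F (t *: v + x)) \o shift 0) (h *: (1:R)) - (fun t : R => F (t *: v + x)) 0)).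
Proof.
apply/funext => t /=. rewrite scale0r add0r addr0.
by rewrite [t *: (1:R)]mulr1.
Qed.

Lemma derive_line (R : realType) n (F : 'rV[R]_n -> R) (x v : 'rV[R]_n) :
  'D_v F x = 'D_1 (fun t : R => F (t *: v + x)) 0.
Proof. by rewrite /derive line_fun. Qed.

Lemma derivable_line (R : realType) n (F : 'rV[R]_n -> R) (x v : 'rV[R]_n) :
  derivable F x v -> derivable (fun t : R => F (t *: v + x)) 0 1.
Proof. by rewrite /derivable line_fun. Qed.
(* n = m.+2 (i.e. n >= 2); x_n is coordinate ord_max, x_{n-1} is inord m. *)
Theorem theorem3 (R : realType) (m : nat) (l g h : R -> R)
  (P : 'rV[R]_(m.+2) -> R) (sigma q : R) :
  is_MSRS l g h P sigma ->
  0 < q ->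
  msrs_equilibrium l g h P sigma (const_mx q) ->
  let r : 'rV[R]_(m.+2) := const_mx q in
  let Dn := - (P r + h q) / l q in
  let tau := partial (msrs_f l g h P sigma ord_max) ord_max r in
  let xi := partial P (inord m) r / Dn in
  let G1 := tau - xi in
  let G2 := tau + m.+1%:R * xi in
  char_poly (msrs_jacobian l g h P sigma r)
    = ('X - G1%:P) ^+ m.+1 * ('X - G2%:P).
Proof.
move=> [dl dg dh dP [sp symP pos lnz _]] q0 [rpos eqr] r Dn tau xi G1 G2.
have entry : forall (k a : 'I_(m.+2)) (t : R),
    (t *: delta_mx 0 k + r) 0 a = t * (a == k)%:R + q.
  by move=> k a t; rewrite /r !mxE.
have r0 : forall a, r 0 a = q by move=> a; rewrite /r mxE.
have Pline : forall (i j : 'I_(m.+2)) (t : R),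
    P (t *: delta_mx 0 i + r) = P (t *: delta_mx 0 j + r).
  move=> i j t; rewrite -(symP i j (t *: delta_mx 0 i + r)); congr P.
  apply/matrixP => a b; rewrite !mxE.
  have -> : (tperm i j b == i) = (b == j).
    apply/eqP/eqP => [E|->]; last exact: tpermR.
    by rewrite -(tpermK i j b) E tpermL.
  done.
set p := partial P (inord m) r.
have Pp : forall j, partial P j r = p.
  move=> j; rewrite /p /partial.
  rewrite (@derive_line _ _ P r (delta_mx 0 j)) (@derive_line _ _ P r (delta_mx 0 (inord m))).
  have -> : (fun t : R => P (t *: delta_mx 0 j + r)) = (fun t : R => P (t *: delta_mx 0 (inord m) + r)) by apply/funext => t; apply: Pline.
  by [].
have S0 : P r + h q != 0.
  have := pos ord_max r rpos; rewrite r0 => H; by rewrite gt_eqF.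
have L0 : l q != 0 by apply: lnz.
have eqq : sigma * g q = l q * (P r + h q).
  have := eqr ord_max; rewrite -/r /msrs_f r0 => /eqP; rewrite addrC subr_eq0 => /eqP E'.
  by rewrite -E' mulrA mulrVK ?unitfE.
have Jdiag : forall i, partial (msrs_f l g h P sigma i) i r = tau.
  move=> i; rewrite /tau /partial.
  rewrite (@derive_line _ _ (msrs_f l g h P sigma i) r (delta_mx 0 i)).
  rewrite (@derive_line _ _ (msrs_f l g h P sigma ord_max) r (delta_mx 0 ord_max)).
  have -> : (fun t : R => msrs_f l g h P sigma i (t *: delta_mx 0 i + r)) =
    (fun t : R => msrs_f l g h P sigma ord_max (t *: delta_mx 0 ord_max + r)).
    by apply/funext => t; rewrite /msrs_f !entry !eqxx (Pline i ord_max).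
  by [].
have Joff : forall i j, i != j -> partial (msrs_f l g h P sigma i) j r = xi.
  move=> i j ij; rewrite /partial (@derive_line _ _ (msrs_f l g h P sigma i) r (delta_mx 0 j)).
  set phi := fun t : R => P (t *: delta_mx 0 j + r).
  have -> : (fun t => msrs_f l g h P sigma i (t *: delta_mx 0 j + r)) =
     cst (- l q) + (sigma * g q) \*: (fun t => ((phi + cst (h q)) t)^-1).
    apply/funext => t; rewrite /msrs_f entry (negbTE ij) mulr0 add0r /=.
    by rewrite mulrA.
  have dphi : derivable phi 0 1.
    by apply: derivable_line; apply: diff_derivable; exact: dP.
  have dphic : derivable (phi + cst (h q)) 0 1.
    by apply: derivableD => //; apply: derivable_cst.
  have e0 : (phi + cst (h q)) 0 = P r + h q.
    by rewrite !fctE /phi scale0r add0r.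
  have nz : (phi + cst (h q)) 0 != 0 by rewrite e0.
  have dphiE : 'D_1 phi 0 = p by rewrite -(Pp j) /partial derive_line.
  have dV : derivable (fun t => ((phi + cst (h q)) t)^-1) 0 1 := derivableV nz dphic.
  have dZ := derivableZ (k:=sigma * g q) dV.
  rewrite (deriveD (derivable_cst _ _ _) dZ) derive_cst add0r (deriveZ _ dV) (deriveV nz dphic).
  rewrite (deriveD dphi (derivable_cst _ _ _)) derive_cst addr0 dphiE.
  rewrite e0 /xi /Dn -/p eqq.
  change ((l q * (P r + h q)) * (- (P r + h q) ^- 2 * p) = p / (- (P r + h q) / l q)).
  by field; rewrite S0 L0.
have JE : msrs_jacobian l g h P sigma r =
    \matrix_(i, j) (if i == j then tau else xi).
  apply/matrixP => i j; rewrite !mxE; case: eqP => [->|/eqP ij].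
    exact: Jdiag.
  exact: Joff.
rewrite /char_poly JE.
have -> : char_poly_mx (\matrix_(i, j) (if i == j then tau else xi) : 'M[R]_(m.+2)) =
   \matrix_(i, j) (if i == j then 'X - tau%:P else - xi%:P).
  apply/matrixP => i j; rewrite !mxE; case: eqP => _ /=; by rewrite ?mulr1n ?mulr0n ?sub0r.
rewrite det_de /G1 /G2 polyCB polyCD (polyCM (m.+1%:R) xi) polyC_natr.
congr (_ ^+ _ * _); first by ring.
by ring.
Qed.
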